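(* There is no finite, simple, connected, regular plane graph with at least two faces in which all faces but one have the same length and the remaining single face has a different length. In other words, there is no $1$-nearly platonic graph.
   Context: A plane graph is a planar graph with a fixed embedding in the plane; its faces are the connected regions of the complement of the drawing. The length of a face is the total length of the closed walk(s) bounding it (a cut-edge contributes twice). A $1$-nearly platonic graph is a finite, connected, simple, regular plane graph with $f\ge 2$ faces such that $f-1$ of its faces all have the same length $d_1$ and the remaining face has length $d_2\ne d_1$, where $d_1,d_2\ge 3$. *)

(* Defs.v *)
(* Plane graphs are encoded combinatorially as rotation
   systems (combinatorial maps) of genus 0. *)
From mathcomp Require Import all_boot.
Set Implicit Arguments. Unset Strict Implicit. Unset Printing Implicit Defensive.

(* A combinatorial map on the finite set D of darts (half-edges):
   - e : the edge involution, fixed-point free (each edge = 2 darts);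
   - n : the vertex rotation, a permutation (cyclic order of darts around
         each vertex, given by the embedding).
   Vertices = orbits of n, edges = orbits of e, faces = orbits of the
   face permutation face e n := n \o e.  The length of a face is the size
   of its orbit (number of darts traversed by the facial walk, so a
   cut-edge is counted twice). *)

Definition face (D : finType) (e n : D -> D) : D -> D := fun x => n (e x).

Definition is_map (D : finType) (e n : D -> D) : Prop :=
  [/\ cancel e e, forall x, e x != x & injective n].

Definition map_connected (D : finType) (e n : D -> D) : Prop :=
  forall x y : D, connect (fun u v => (v == e u) || (v == n u)) x y.

Definition num_vertices (D : finType) (e n : D -> D) : nat := fcard n D.
Definition num_edges (D : finType) (e n : D -> D) : nat := fcard e D.
Definition num_faces (D : finType) (e n : D -> D) : nat := fcard (face e n) D.

(* genus 0 (Euler's formula V - E + F = 2): the map is a plane embedding *)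
Definition planar_map (D : finType) (e n : D -> D) : Prop :=
  num_vertices e n + num_faces e n = num_edges e n + 2.

Definition plane_map (D : finType) (e n : D -> D) : Prop :=
  [/\ is_map e n, map_connected e n & planar_map e n].

(* simple underlying graph: no loops, no multiple edges *)
Definition simple_map (D : finType) (e n : D -> D) : Prop :=
  (forall x : D, ~~ fconnect n x (e x)) /\
  (forall x y : D, fconnect n x y -> fconnect n (e x) (e y) -> x = y).

Definition regular_map (D : finType) (e n : D -> D) : Prop :=
  forall x y : D, order n x = order n y.

Definition face_length (D : finType) (e n : D -> D) (x : D) : nat :=
  order (face e n) x.

Definition one_nearly_platonic (D : finType) (e n : D -> D) : Prop :=
  [/\ plane_map e n, simple_map e n, regular_map e n,
      2 <= num_faces e n &
      exists (d1 d2 : nat) (x0 : D),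
        [/\ 3 <= d1, 3 <= d2, d1 != d2,
            face_length e n x0 = d2 &
            forall x : D, ~~ fconnect (face e n) x0 x ->
                          face_length e n x = d1]].

(* Main.v *)
Require Import Defs.
From mathcomp Require Import all_boot all_fingroup zify ring.
Import fingraph.
Set Implicit Arguments. Unset Strict Implicit. Unset Printing Implicit Defensive.

Lemma connect_ind_pred (T : finType) (r : rel T) (P : pred T) x y :
  connect r x y -> P x -> (forall u v, r u v -> P u -> P v) -> P y.
Proof.
move/connectP => [p pth ->] Px H.
elim: p x pth Px => //= z p IH x /andP[rxz pth] Px; exact: IH pth (H _ _ rxz Px).
Qed.

Section PermCount.
Variable T : finType.
Implicit Types (s t : {perm T}) (x y : T).

Lemma porbit_fconnect s x y : (y \in porbit s x) = fconnect s x y.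
Proof.
apply/porbitP/idP => [[i ->]|h]; first by rewrite permX; apply: fconnect_iter.
by exists (findex s x y); rewrite permX iter_findex.
Qed.

Lemma fcard_porbits s : fcard s T = #|porbits s|.
Proof.
have symf := fconnect_sym (@perm_inj _ s).
pose R := [set x | froots s x].
have -> : porbits s = porbit s @: R.
  apply/setP => P; apply/imsetP/imsetP => [[x _ ->]|[x _ ->]]; last by exists x.
  exists (froot s x); first by rewrite inE roots_root.
  apply/eqP; rewrite eq_porbit_mem porbit_fconnect symf; exact: connect_root.
rewrite card_in_imset; last first.
  move=> x y; rewrite !inE => /eqP rx /eqP ry /eqP.
  rewrite eq_porbit_mem porbit_fconnect => /(rootP symf).
  by rewrite rx ry.
by apply: eq_card => x; rewrite !inE andbT.
Qed.

Lemma card_porbits_le s : #|porbits s| <= #|T|.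
Proof. exact: leq_imset_card. Qed.

Lemma porbits1 : #|porbits (1 : {perm T})| = #|T|.
Proof.
rewrite card_imset // => x y /eqP; rewrite eq_porbit_mem => /porbitP[i ->].
by rewrite expg1n perm1.
Qed.

Lemma tperm_split t x : t x != x ->
  #|porbits (tperm x (t x) * t)| = #|porbits t| + 1.
Proof.
move=> ne; have := porbits_mul_tperm t x (t x).
have h : t x \in porbit t x by have := mem_porbit t 1 x; rewrite expg1.
by rewrite porbit_sym h /= eq_sym ne addn0.
Qed.

Lemma cyc_tperm_le s x y : #|porbits (tperm x y * s)| <= #|porbits s| + 1.
Proof.
have := porbits_mul_tperm s x y; case: (x != y); case: (x \notin _) => /=; lia.
Qed.

Lemma perm_neq1 t : t != 1%g -> exists x, t x != x.
Proof.
move=> ne; apply/existsP; apply: contraR ne => /existsPn h.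
by apply/eqP/permP => x; rewrite perm1; apply/eqP; move: (h x); rewrite negbK.
Qed.

Lemma cyc_mul_le s t :
  #|porbits (t * s)| + #|porbits t| <= #|porbits s| + #|T|.
Proof.
move Hm : (#|T| - #|porbits t|) => m.
elim: m s t Hm => [|m IH] s t Hm.
  have [->|/perm_neq1 [x ne]] := eqVneq t 1%g; first by rewrite mul1g porbits1.
  have := tperm_split ne; have := card_porbits_le (tperm x (t x) * t)%g. lia.
have [->|/perm_neq1 [x ne]] := eqVneq t 1%g; first by rewrite mul1g porbits1.
set u := (tperm x (t x) * t)%g.
have Hu := tperm_split ne; rewrite -/u in Hu.
have tu : t = (tperm x (t x) * u)%g by rewrite /u tpermKg.
have := IH s u; have := card_porbits_le u.
have := cyc_tperm_le (u * s)%g x (t x).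
have -> : (tperm x (t x) * (u * s))%g = (t * s)%g by rewrite mulgA -tu.
lia.
Qed.

Definition prel (a b : {perm T}) := [rel u v | (v == b u) || (v == a u)].

Lemma prel_iter a b u i : connect (prel a b) u (iter i a u).
Proof.
elim: i => [|i IH] //=; apply: connect_trans IH _; apply: connect1.
by rewrite /= eqxx orbT.
Qed.

Lemma prel_porbit a b u v : v \in porbit a u -> connect (prel a b) u v.
Proof. by move/porbitP => [i ->]; rewrite permX; apply: prel_iter. Qed.

Lemma euler_perm (a b : {perm T}) :
  (forall x y, connect (prel a b) x y) ->
  #|porbits a| + #|porbits b| + #|porbits (b * a)| <= #|T| + 2.
Proof.
move Hc : #|porbits a| => c; elim: c a b Hc => [|c IH] a b Hc conn.
  by have := cyc_mul_le a b; rewrite Hc; lia.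
have [le1|gt1] := leqP c 0.
  by have := cyc_mul_le a b; rewrite Hc; lia.
have [x nx] : exists x, b x \notin porbit a x.
  apply/existsP; apply: contraLR gt1 => /existsPn h; rewrite -leqNgt.
  have : 0 < #|porbits a| by rewrite Hc.
  case/card_gt0P => P0 /imsetP[x0 _ _].
  have sub : porbits a \subset [set porbit a x0].
    apply/subsetP => P /imsetP[y _ ->]; rewrite inE; apply/eqP/eqP.
    rewrite eq_porbit_mem.
    apply: (connect_ind_pred (conn x0 y)); first exact: porbit_id.
    move=> u v /orP[] /eqP -> hu;
      have E : porbit a u = porbit a x0 by apply/eqP; rewrite eq_porbit_mem.
      by rewrite -E; move: (h u); rewrite negbK.
    by rewrite -E; have := mem_porbit a 1 u; rewrite expg1.
  by have := subset_leq_card sub; rewrite cards1 Hc.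
set y := b x.
have xy : x != y.
  by apply: contraNneq nx => E; rewrite -/y -E porbit_id.
set t := tperm x y.
have Ha' : #|porbits (t * a)| = c.
  have := porbits_mul_tperm a x y; rewrite -/t porbit_sym nx xy Hc /=; lia.
have Hb' : #|porbits (b * t)| = #|porbits b| + 1.
  rewrite -porbitsV invMg tpermV -(porbitsV b).
  have := porbits_mul_tperm b^-1 x y; rewrite porbitV porbit_sym.
  have -> : y \in porbit b x by have := mem_porbit b 1 x; rewrite expg1.
  by rewrite xy /= addn0.
have prod : ((b * t) * (t * a) = b * a)%g by rewrite -mulgA /t tpermKg.
have cyx : y \in porbit (t * a) x.
  have := porbits_mul_tperm (t * a) x y; rewrite -/t /t tpermKg -/t.
  rewrite Ha' Hc xy porbit_sym; case: (y \in _) => //=; lia.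
have sw : forall w, connect (prel (t * a) (b * t)) w (t w).
  move=> w; case: tpermP => [->|->|_ _] //.
    by apply: prel_porbit.
  by apply: prel_porbit; rewrite porbit_sym.
have stepb : forall u, connect (prel (t * a) (b * t)) u (b u).
  move=> u; have h1 : connect (prel (t * a) (b * t)) u ((b * t)%g u).
    by apply: connect1; rewrite /= eqxx.
  have h2 := sw ((b * t)%g u); rewrite permM /t tpermK -/t in h2.
  rewrite permM in h1; exact: connect_trans h1 h2.
have stepa : forall u, connect (prel (t * a) (b * t)) u (a u).
  move=> u; apply: connect_trans (sw u) _; apply: connect1.
  by rewrite /= !permM /t tpermK eqxx orbT.
have conn' : forall u v, connect (prel (t * a) (b * t)) u v.
  move=> u v; apply: connect_sub (conn u v) => {}u {}v /orP[] /eqP ->.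
    exact: stepb.
  exact: stepa.
have := IH _ _ Ha' conn'; rewrite prod Hb'; lia.
Qed.
End PermCount.
Definition mrel (T : eqType) (e n : T -> T) := fun u v : T => (v == e u) || (v == n u).
Section Count.
Variables (T : finType) (f : T -> T).
Hypothesis injf : injective f.

Lemma card_sum_order (A : {pred T}) : fclosed f A ->
  #|A| = \sum_(x | froots f x && (x \in A)) order f x.
Proof.
move=> clA; have symf := fconnect_sym injf.
rewrite -sum1_card (partition_big (froot f) (fun r => froots f r && (r \in A))).
  apply: eq_bigr => r /andP[/eqP rr rA]; rewrite sum1_card /order.
  apply: eq_card => x; rewrite !inE; apply/andP/idP => [[xA /eqP rx]|crx].
    by rewrite -rx symf connect_root.
  split; first by rewrite -(closed_connect clA crx).
  by apply/eqP; rewrite -rr; apply/esym/rootP.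
move=> x xA; rewrite /= roots_root //.
by rewrite -(closed_connect clA (connect_root _ x)).
Qed.

Lemma fcard_le_order (A : {pred T}) m : fclosed f A ->
  (forall x, x \in A -> order f x <= m) -> #|A| <= fcard f A * m.
Proof.
move=> clA le; rewrite (card_sum_order clA) /n_comp_mem.
rewrite -sum1_card big_distrl /= mul1n.
apply: leq_sum => x /andP[_ xA]; exact: le.
Qed.

Lemma fcard_ge_order (A : {pred T}) m : fclosed f A ->
  (forall x, x \in A -> m <= order f x) -> fcard f A * m <= #|A|.
Proof.
move=> clA le; rewrite (card_sum_order clA) /n_comp_mem.
rewrite -sum1_card big_distrl /= mul1n.
apply: leq_sum => x /andP[_ xA]; exact: le.
Qed.

Lemma iter_mul_id x m q : iter m f x = x -> iter (q * m) f x = x.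
Proof. by move=> it; elim: q => //= q IH; rewrite mulSn iterD IH it. Qed.

Lemma order_le_iter x m : 0 < m -> iter m f x = x -> order f x <= m.
Proof.
move=> m0 it; rewrite /order.
apply: leq_trans (_ : #|[seq iter i f x | i <- iota 0 m]| <= _); last first.
  by apply: leq_trans (card_size _) _; rewrite size_map size_iota.
apply: subset_leq_card; apply/subsetP => y cxy; apply/mapP.
exists (findex f x y %% m); first by rewrite mem_iota ltn_mod m0.
have E := iter_findex cxy; move: (findex f x y) E => j <-.
by rewrite {1}(divn_eq j m) addnC iterD iter_mul_id.
Qed.
End Count.
Section Fiber.
Variables (X Y : finType) (eX nX : X -> X) (eY nY : Y -> Y) (pi : X -> Y).
Hypotheses (injeX : injective eX) (injnX : injective nX).
Hypotheses (pie : forall z, pi (eX z) = eY (pi z)) (pin : forall z, pi (nX z) = nY (pi z)).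
Variable A : {pred X}.
Hypotheses (clAe : forall z, z \in A -> eX z \in A) (clAn : forall z, z \in A -> nX z \in A).
Hypothesis connY : forall y y', connect (mrel eY nY) y y'.

Definition fib y := [set z | (z \in A) && (pi z == y)].

Lemma fib_step y y' : mrel eY nY y y' -> #|fib y| <= #|fib y'|.
Proof.
move=> /orP[] /eqP ->.
  rewrite -(card_imset _ injeX); apply: subset_leq_card; apply/subsetP => w /imsetP[z].
  by rewrite inE => /andP[zA /eqP Ez] ->; rewrite inE clAe //= pie Ez eqxx.
rewrite -(card_imset _ injnX); apply: subset_leq_card; apply/subsetP => w /imsetP[z].
by rewrite inE => /andP[zA /eqP Ez] ->; rewrite inE clAn //= pin Ez eqxx.
Qed.

Lemma fib_const y y' : #|fib y| = #|fib y'|.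
Proof.
have le : forall u v, #|fib u| <= #|fib v|.
  move=> u v; apply: (connect_ind_pred (connY u v) (P := fun w => #|fib u| <= #|fib w|)) => //.
  by move=> w w' r h; apply: leq_trans h (fib_step r).
by apply/eqP; rewrite eqn_leq !le.
Qed.

Lemma card_fib y0 : #|A| = #|Y| * #|fib y0|.
Proof.
rewrite -sum1_card (partition_big pi predT) //.
rewrite -sum_nat_const.
apply: eq_bigr => y _; rewrite -(fib_const y y0) -sum1_card.
by apply: eq_bigl => z; rewrite inE.
Qed.
Lemma card_fib_pred (Q : {pred Y}) y0 : #|[pred z in A | pi z \in Q]| = #|Q| * #|fib y0|.
Proof.
rewrite -[LHS]sum1_card (partition_big pi (mem Q)); last by move=> z /andP[].
rewrite -sum_nat_const.
apply: eq_bigr => y yQ; rewrite -(fib_const y y0) -sum1_card.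
apply: eq_bigl => z; rewrite !inE.
have yQ' : y \in Q := yQ.
by case: eqP => [->|]; rewrite ?andbT ?andbF // yQ' andbT.
Qed.
End Fiber.
Section Tab.
Variables (M : nat) (eL nL : seq nat) (k d : nat).
Definition fe i := nth 0 eL i.
Definition fn i := nth 0 nL i.
Definition tab (l : seq nat) : 'I_M.+1 -> 'I_M.+1 := fun i => inord (nth 0 l i).
Fixpoint reach j (s : seq nat) :=
  if j is j'.+1 then reach j' (undup (s ++ map fe s ++ map fn s)) else s.
Definition goodb : bool :=
  all (fun i => [&& fe i < M.+1, fn i < M.+1, fe (fe i) == i &
        [&& fe i != i, iter k fn i == i & iter d (fun x => fn (fe x)) i == i]])
    (iota 0 M.+1) &&
  (let R := reach M.+1 [:: 0] in all (fun i => i \in R) (iota 0 M.+1)).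
Hypothesis good : goodb.
Definition tE := tab eL.
Definition tN := tab nL.

Lemma goodP i : i < M.+1 -> [&& fe i < M.+1, fn i < M.+1, fe (fe i) == i &
        [&& fe i != i, iter k fn i == i & iter d (fun x => fn (fe x)) i == i]].
Proof. by move=> lt; case/andP: good => /allP h _; apply: h; rewrite mem_iota. Qed.
Lemma g1 i : i < M.+1 -> fe i < M.+1. Proof. by move/goodP/and4P => []. Qed.
Lemma g2 i : i < M.+1 -> fn i < M.+1. Proof. by move/goodP/and4P => []. Qed.
Lemma g3 i : i < M.+1 -> fe (fe i) = i. Proof. by move/goodP/and4P => [_ _ /eqP]. Qed.
Lemma g4 i : i < M.+1 -> fe i != i. Proof. by move/goodP/and4P => [_ _ _ /and3P[]]. Qed.
Lemma g5 i : i < M.+1 -> iter k fn i = i. Proof. by move/goodP/and4P => [_ _ _ /and3P[_ /eqP]]. Qed.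
Lemma g6 i : i < M.+1 -> iter d (fun x => fn (fe x)) i = i.
Proof. by move/goodP/and4P => [_ _ _ /and3P[_ _ /eqP]]. Qed.
Lemma g7 i : i < M.+1 -> i \in reach M.+1 [:: 0].
Proof. by move=> lt; case/andP: good => _ /allP h; apply: h; rewrite mem_iota. Qed.

Lemma valE p : nat_of_ord (tE p) = fe p.
Proof. by rewrite /tE /tab /= inordK // g1. Qed.
Lemma valN p : nat_of_ord (tN p) = fn p.
Proof. by rewrite /tN /tab /= inordK // g2. Qed.

Lemma val_iterN j p : nat_of_ord (iter j tN p) = iter j fn p.
Proof. by elim: j => //= j IH; rewrite valN IH. Qed.
Lemma val_iterF j p : nat_of_ord (iter j (fun x => tN (tE x)) p) = iter j (fun x => fn (fe x)) p.
Proof. by elim: j => //= j IH; rewrite valN valE IH. Qed.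

Lemma tabEK : cancel tE tE.
Proof. by move=> p; apply: ord_inj; rewrite !valE g3. Qed.
Lemma tabE_fp p : tE p != p.
Proof. by rewrite -(inj_eq (@ord_inj _)) valE g4. Qed.
Lemma tabN_iter p : iter k tN p = p.
Proof. by apply: ord_inj; rewrite val_iterN g5. Qed.
Lemma tabF_iter p : iter d (fun x => tN (tE x)) p = p.
Proof. by apply: ord_inj; rewrite val_iterF g6. Qed.

Lemma reach_ok j s : (forall x, x \in s -> x < M.+1 /\ connect (mrel tE tN) ord0 (inord x)) ->
  forall x, x \in reach j s -> x < M.+1 /\ connect (mrel tE tN) ord0 (inord x).
Proof.
elim: j s => //= j IH s Hs; apply: IH => x; rewrite mem_undup !mem_cat.
case/or3P => [/Hs //| /mapP[y ys ->]| /mapP[y ys ->]]; have [ylt cy] := Hs y ys;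
  have lte := g1 ylt; have ltn := g2 ylt; split => //.
  apply: connect_trans cy (connect1 _); apply/orP; left; apply/eqP; apply: ord_inj.
  by rewrite valE !inordK.
apply: connect_trans cy (connect1 _); apply/orP; right; apply/eqP; apply: ord_inj.
by rewrite valN !inordK.
Qed.

Lemma tab_conn0 p : connect (mrel tE tN) ord0 p.
Proof.
have := @reach_ok M.+1 [:: 0] _ p.
have r := g7 (ltn_ord p).
case => //; first by move=> x; rewrite inE => /eqP ->; split => //; rewrite (_ : inord 0 = ord0) //; apply: ord_inj; rewrite inordK.
by move=> _; rewrite inord_val.
Qed.
End Tab.
Definition tet_e := [:: 3; 6; 9; 0; 7; 10; 1; 4; 11; 2; 5; 8].
Definition tet_n := [:: 1; 2; 0; 5; 3; 4; 7; 8; 6; 11; 9; 10].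
Definition cube_e := [:: 3; 6; 12; 0; 9; 15; 1; 10; 18; 4; 7; 21; 2; 16; 19; 5; 13; 22; 8; 14; 23; 11; 17; 20].
Definition cube_n := [:: 1; 2; 0; 5; 3; 4; 7; 8; 6; 11; 9; 10; 14; 12; 13; 16; 17; 15; 20; 18; 19; 22; 23; 21].
Definition octa_e := [:: 8; 12; 16; 20; 9; 13; 17; 21; 0; 4; 18; 22; 1; 5; 19; 23; 2; 6; 10; 14; 3; 7; 11; 15].
Definition octa_n := [:: 2; 3; 1; 0; 7; 6; 4; 5; 11; 10; 8; 9; 14; 15; 13; 12; 18; 19; 17; 16; 23; 22; 20; 21].
Definition dod_e := [:: 24; 27; 30; 28; 33; 48; 31; 36; 42; 37; 49; 51; 25; 39; 45; 34; 46; 57; 40; 43; 54; 52; 55; 58; 0; 12; 44; 1; 3; 47; 2; 6; 50; 4; 15; 53; 7; 9; 56; 13; 18; 59; 8; 19; 26; 14; 16; 29; 5; 10; 32; 11; 21; 35; 20; 22; 38; 17; 23; 41].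
Definition dod_n := [:: 1; 2; 0; 4; 5; 3; 7; 8; 6; 10; 11; 9; 13; 14; 12; 16; 17; 15; 19; 20; 18; 23; 21; 22; 26; 24; 25; 29; 27; 28; 32; 30; 31; 34; 35; 33; 37; 38; 36; 40; 41; 39; 43; 44; 42; 46; 47; 45; 49; 50; 48; 53; 51; 52; 56; 54; 55; 59; 57; 58].
Definition ico_e := [:: 5; 10; 25; 30; 35; 0; 11; 15; 36; 40; 1; 6; 20; 31; 41; 7; 37; 42; 45; 55; 12; 32; 43; 46; 50; 2; 33; 38; 51; 56; 3; 13; 21; 26; 52; 4; 8; 16; 27; 57; 9; 14; 17; 22; 47; 18; 23; 44; 53; 58; 24; 28; 34; 48; 59; 19; 29; 39; 49; 54].
Definition ico_n := [:: 1; 3; 4; 2; 0; 8; 5; 9; 7; 6; 11; 14; 13; 10; 12; 16; 19; 15; 17; 18; 22; 20; 23; 24; 21; 26; 28; 25; 29; 27; 31; 32; 34; 30; 33; 38; 35; 36; 39; 37; 42; 40; 44; 41; 43; 49; 47; 45; 46; 48; 53; 52; 50; 54; 51; 57; 59; 56; 55; 58].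
Lemma tet_good : goodb 11 tet_e tet_n 3 3. Proof. by vm_compute. Qed.
Lemma cube_good : goodb 23 cube_e cube_n 3 4. Proof. by vm_compute. Qed.
Lemma octa_good : goodb 23 octa_e octa_n 4 3. Proof. by vm_compute. Qed.
Lemma dod_good : goodb 59 dod_e dod_n 3 5. Proof. by vm_compute. Qed.
Lemma ico_good : goodb 59 ico_e ico_n 5 3. Proof. by vm_compute. Qed.

Lemma fcard_ext (T : finType) (f g : T -> T) (a : {pred T}) : f =1 g -> fcard f a = fcard g a.
Proof. by move=> fg; apply: eq_n_comp; apply: eq_connect => x y; rewrite /= fg. Qed.

Lemma euler_fun (T : finType) (e n : T -> T) : cancel e e -> injective n ->
  (forall x y, connect (mrel e n) x y) ->
  fcard n T + fcard e T + fcard (face e n) T <= #|T| + 2.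
Proof.
move=> eK ni conn.
pose a := perm ni; pose b := perm (can_inj eK).
have := @euler_perm T a b.
rewrite -!fcard_porbits.
rewrite (@fcard_ext _ a n) ?(@fcard_ext _ b e) ?(@fcard_ext _ (b * a)%g (face e n)) //.
- apply; move=> x y; rewrite (@eq_connect _ _ (mrel e n)) // => u v.
  by rewrite /prel /mrel /= !permE.
- by move=> x; rewrite permM !permE.
- by move=> x; rewrite permE.
- by move=> x; rewrite permE.
Qed.

Lemma mrel_sym (T : finType) (e n : T -> T) x y : injective e -> injective n ->
  connect (mrel e n) x y -> connect (mrel e n) y x.
Proof.
move=> ei ni cxy; apply: (connect_ind_pred cxy (P := fun v => connect (mrel e n) v x)) => //.
move=> u v /orP[] /eqP -> h; apply: connect_trans h.
  have : fconnect e (e u) u by rewrite (fconnect_sym ei) fconnect1.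
  by apply: connect_sub => a b /eqP <-; apply: connect1; rewrite /mrel eqxx.
have : fconnect n (n u) u by rewrite (fconnect_sym ni) fconnect1.
by apply: connect_sub => a b /eqP <-; apply: connect1; rewrite /mrel eqxx orbT.
Qed.

Lemma order_inv2 (T : finType) (f : T -> T) x : cancel f f -> f x != x -> order f x = 2.
Proof.
move=> fK ne; have fi := can_inj fK.
have h2 : order f x <= 2 by apply: order_le_iter => //=; rewrite !fK.
apply/eqP; rewrite eqn_leq h2 /=.
rewrite /order; apply: leq_trans (subset_leq_card (_ : [set x; f x] \subset _)).
  by rewrite cards2 eq_sym ne.
by apply/subsetP => y; rewrite !inE => /orP[] /eqP ->; rewrite ?connect0 ?fconnect1.
Qed.

Lemma G_counts (D : finType) (e n : D -> D) k d r x0 : cancel e e -> (forall x, e x != x) ->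
  injective n ->
  (forall x, order n x = k) -> order (face e n) x0 = r ->
  (forall x, ~~ fconnect (face e n) x0 x -> order (face e n) x = d) ->
  [/\ fcard n D * k = #|D|, fcard e D * 2 = #|D| &
      exists F', fcard (face e n) D = F'.+1 /\ F' * d = #|D| - r].
Proof.
move=> eK efp ni hk hr hd.
have fi : injective (face e n) by move=> x y /ni /(can_inj eK).
split.
- rewrite (fcard_order_set ni) //; by apply/subsetP => x _; rewrite inE /= hk.
- rewrite (fcard_order_set (can_inj eK)) //; by apply/subsetP => x _; rewrite inE /= order_inv2.
set O := fconnect (face e n) x0.
have symf : connect_sym (frel (face e n)) by apply: fconnect_sym.
exists (fcard (face e n) [predC O]); rewrite (n_compC O) n_comp_connect //.
split => //.
rewrite (fcard_order_set fi).
- have := cardC O; rewrite -hr /order -/O => <-; by rewrite addKn.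
- apply/subsetP => x; rewrite !inE => /hd ->; by [].
- exact: predC_closed (connect_closed symf x0).
Qed.

Lemma card_sig_pred (T : finType) (C Q : pred T) :
  #|[pred z : {x | C x} | Q (val z)]| = #|[pred x | C x && Q x]|.
Proof.
rewrite -(card_image val_inj); apply: eq_card => x; rewrite !inE.
apply/imageP/andP => [[z zQ ->]|[Cx Qx]]; first by split => //; apply: valP.
by exists (exist _ x Cx).
Qed.

Section Sub.
Variables (Z : finType) (eZ nZ : Z -> Z) (z0 : Z).
Definition CC := fun z => connect (mrel eZ nZ) z0 z.
Lemma CC_e z : CC z -> CC (eZ z).
Proof. by move=> h; apply: connect_trans h (connect1 _); rewrite /mrel eqxx. Qed.
Lemma CC_n z : CC z -> CC (nZ z).
Proof. by move=> h; apply: connect_trans h (connect1 _); rewrite /mrel eqxx orbT. Qed.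
Definition XX : finType := {z : Z | CC z}.
Definition eXX (u : XX) : XX := exist _ (eZ (val u)) (CC_e (valP u)).
Definition nXX (u : XX) : XX := exist _ (nZ (val u)) (CC_n (valP u)).
Lemma iter_nXX j u : val (iter j nXX u) = iter j nZ (val u).
Proof. by elim: j => //= j ->. Qed.
Lemma iter_fXX j u : val (iter j (face eXX nXX) u) = iter j (face eZ nZ) (val u).
Proof. by elim: j => //= j ->. Qed.
Lemma CC_iterf j z : CC z -> CC (iter j (face eZ nZ) z).
Proof. by elim: j => //= j IH h; apply/CC_n/CC_e/IH. Qed.

Hypotheses (eZi : injective eZ) (nZi : injective nZ).
Lemma XX_conn u v : connect (mrel eXX nXX) u v.
Proof.
have cz : connect (mrel eZ nZ) (val u) (val v).
  exact: connect_trans (mrel_sym eZi nZi (valP u)) (valP v).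
have : [exists v' : XX, (val v' == val v) && connect (mrel eXX nXX) u v'].
  apply: (connect_ind_pred cz (P := fun w => [exists v' : XX, (val v' == w) && connect (mrel eXX nXX) u v'])).
    by apply/existsP; exists u; rewrite eqxx connect0.
  move=> w w' /orP[] /eqP -> /existsP[v' /andP[/eqP <- cv]]; apply/existsP.
    exists (eXX v'); rewrite eqxx /=; apply: connect_trans cv (connect1 _).
    by rewrite /mrel eqxx.
  exists (nXX v'); rewrite eqxx /=; apply: connect_trans cv (connect1 _).
  by rewrite /mrel eqxx orbT.
by case/existsP => v' /andP[/eqP /val_inj ->].
Qed.
End Sub.

Section Cover.
Variables (D P : finType) (e n : D -> D) (eP nP : P -> P) (k d r : nat) (x0 : D).
Hypotheses (eK : cancel e e) (efp : forall x, e x != x) (ni : injective n)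
  (connD : forall x y, connect (mrel e n) x y)
  (hk : forall x, order n x = k) (hr : order (face e n) x0 = r)
  (hd : forall x, ~~ fconnect (face e n) x0 x -> order (face e n) x = d)
  (planar : fcard n D + fcard (face e n) D = fcard e D + 2)
  (ePK : cancel eP eP) (ePfp : forall p, eP p != p) (nPk : forall p, iter k nP p = p)
  (fPd : forall p, iter d (face eP nP) p = p)
  (connP : forall p q, connect (mrel eP nP) p q)
  (Meq : #|P| * (2 * k + 2 * d) = 4 * k * d + #|P| * k * d)
  (dpos : 0 < d) (rd : r != d).

Lemma cover_false : False.
Proof.
have [hV hE [F' [hF hF']]] := G_counts eK efp ni hk hr hd.
have kpos : 0 < k by rewrite -(hk x0) order_gt0.
have ei := can_inj eK.
have ePi := can_inj ePK.
have nPi : injective nP.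
  apply: (can_inj (g := iter k.-1 nP)) => p; rewrite -iterSr prednK //.
have rN : r <= #|D| by rewrite -hr /order max_card.
have Geq : #|D| * (2 * k + 2 * d) = k * d * #|D| + 2 * k * d + 2 * k * r.
  have pl := planar; rewrite hF in pl.
  move: (fcard n D) (fcard e D) hV hE pl => V E hV hE pl.
  have h1 : #|D| = F' * d + r by lia.
  have e1 : 2 * d * #|D| = 2 * k * d * V by rewrite -hV; ring.
  have e2 : 2 * k * #|D| = 2 * k * d * F' + 2 * k * r by rewrite h1; ring.
  have e3 : k * d * #|D| = 2 * k * d * E by rewrite -hE; ring.
  have e4 : 2 * k * d * (V + F' + 1) = 2 * k * d * (E + 2) by rewrite -pl -addnA addn1.
  nia.
have Mpos : 0 < #|P|.
  rewrite lt0n; apply/eqP => M0; move: Meq; rewrite M0; nia.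
have [p0 _] : exists p0 : P, true by case/card_gt0P: Mpos => p _; exists p.
pose Z := (D * P)%type.
pose eZ (z : Z) : Z := (e z.1, eP z.2).
pose nZ (z : Z) : Z := (n z.1, nP z.2).
have eZi : injective eZ by move=> [x p] [y q] [] /ei -> /ePi ->.
have nZi : injective nZ by move=> [x p] [y q] [] /ni -> /nPi ->.
pose z0 : Z := (x0, p0).
pose C : {pred Z} := [pred z | CC eZ nZ z0 z].
have clCe : forall z, z \in C -> eZ z \in C by move=> z; apply: CC_e.
have clCn : forall z, z \in C -> nZ z \in C by move=> z; apply: CC_n.
have hC1 := @card_fib Z D eZ nZ e n fst eZi nZi (fun z => erefl) (fun z => erefl) C clCe clCn connD x0.
have iterZf : forall j w, iter j (face eZ nZ) w = (iter j (face e n) w.1, iter j (face eP nP) w.2).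
  by move=> j [x p]; elim: j => //= j ->.
have iterZn : forall j w, iter j nZ w = (iter j n w.1, iter j nP w.2).
  by move=> j [x p]; elim: j => //= j ->.
set a := #|fib fst C x0| in hC1.
have apos : 0 < a.
  by apply/card_gt0P; exists z0; rewrite inE /= eqxx andbT; apply: connect0.
pose O := fconnect (face e n) x0.
have rpos : 0 < r by rewrite -hr order_gt0.
have cardO : #|O| = r by [].
have fi : injective (face e n) by move=> x y /ni /ei.
have iterO : forall x, x \in O -> iter r (face e n) x = x.
  have Ix0 : iter r (face e n) x0 = x0 by rewrite -hr; apply: iter_order.
  move=> x xO; have := iter_findex xO; move: (findex _ _ _) => j <-.
  by rewrite -iterD addnC iterD Ix0.
have iternotO : forall x, x \notin O -> iter d (face e n) x = x.
  by move=> x xO; rewrite -{1}(hd xO) iter_order.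
have [a1|a2] := leqP a 1.
  have {}a1 : a = 1 by apply/eqP; rewrite eqn_leq a1 apos.
  set b := #|fib snd C p0|.
  have hC2 : #|C| = #|P| * b :=
    @card_fib Z P eZ nZ eP nP snd eZi nZi (fun z => erefl) (fun z => erefl) C clCe clCn connP p0.
  pose OP := fconnect (face eP nP) p0.
  have h1 := @card_fib_pred Z D eZ nZ e n fst eZi nZi (fun z => erefl) (fun z => erefl) C clCe clCn connD O x0.
  have h2 := @card_fib_pred Z P eZ nZ eP nP snd eZi nZi (fun z => erefl) (fun z => erefl) C clCe clCn connP OP p0.
  have OPd : #|OP| <= d by apply: order_le_iter.
  have sub : [pred z in C | fst z \in O] \subset [pred z in C | snd z \in OP].
    apply/subsetP => z; rewrite !inE => /andP[zC zO]; rewrite zC /=.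
    have := iter_findex zO; move: (findex _ _ _) => j Ej.
    pose w := iter j (face eZ nZ) z0.
    have wC : w \in C by apply: CC_iterf; apply: connect0.
    have fz : #|fib fst C z.1| <= 1.
      by rewrite (@fib_const Z D eZ nZ e n fst eZi nZi (fun z => erefl) (fun z => erefl) C clCe clCn connD _ x0) -/a a1.
    have wz : w = z.
      apply: (card_le1_eqP fz); rewrite inE.
        by rewrite eqxx andbT; exact: zC.
      by apply/andP; split; [exact: wC | rewrite /w iterZf /= Ej].
    by rewrite -wz /w iterZf /=; apply: fconnect_iter.
  have := subset_leq_card sub; rewrite h1 h2 cardO -/a a1 muln1 => rle.
  move: hC1 hC2; rewrite a1 muln1 => -> NM.
  have rbd : r <= d * b by apply: leq_trans rle _; rewrite leq_mul2r OPd orbT.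
  move: Geq; rewrite NM => Geq'.
  have Meq' := congr1 (muln b) Meq.
  have E1 : 2 * d * b = d + r.
    apply/eqP; rewrite -(eqn_pmul2l (_ : 0 < 2 * k)) ?muln_gt0 //; apply/eqP.
    move: Geq' Meq'; move: #|P| => M; nia.
  have b1 : b <= 1.
    rewrite -(leq_pmul2l dpos); nia.
  case: b b1 E1 rbd {NM h2 Geq' Meq'} => [|[|//]] _ /=; [nia|].
  rewrite muln1 => E1 _; move/eqP: rd; apply; lia.
pose X : finType := XX eZ nZ z0.
pose eX := @eXX Z eZ nZ z0.
pose nX := @nXX Z eZ nZ z0.
have eXK : cancel eX eX.
  by move=> u; apply: val_inj; rewrite /eX /eXX /= /eZ /=; case: (val u) => x p /=; rewrite eK ePK.
have nXi : injective nX.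
  by move=> u v h; apply: val_inj; apply: nZi; have := congr1 val h.
have eXi := can_inj eXK.
have fXi : injective (face eX nX) by move=> u v /nXi /eXi.
have eu := @euler_fun X eX nX eXK nXi (XX_conn eZi nZi).
have cX : #|X| = #|C| by rewrite card_sig; apply: eq_card.
have VX : #|X| <= fcard nX X * k.
  apply: fcard_le_order => // u _; apply: order_le_iter => //.
  apply: val_inj; rewrite iter_nXX iterZn; case: (val u) => x p /=.
  by rewrite nPk -{1}(hk x) iter_order.
have EX : fcard eX X * 2 = #|X|.
  rewrite (fcard_order_set eXi) //; apply/subsetP => u _; rewrite inE /= order_inv2 //.
  by rewrite -(inj_eq val_inj) /=; case: (val u) => x p /=; rewrite xpair_eqE negb_and efp.
pose A1 : {pred X} := [pred u | (val u).1 \notin O].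
have clA : forall (Q : pred D), (forall x, Q (face e n x) = Q x) ->
    fclosed (face eX nX) [pred u : X | Q (val u).1].
  by move=> Q hQ u v /eqP <-; rewrite !inE /= hQ.
have cl1 : fclosed (face eX nX) A1.
  by apply: (clA (fun x => x \notin O)) => x; rewrite /O !inE -same_fconnect1_r.
have cl2 : fclosed (face eX nX) [predC A1].
  by move=> u v h; have := cl1 u v h; rewrite !inE => ->.
have Fsplit := @n_compC X A1 (frel (face eX nX)).
have F1 : #|A1| <= fcard (face eX nX) A1 * d.
  apply: fcard_le_order => // u; rewrite inE => uO; apply: order_le_iter => //.
  apply: val_inj; rewrite iter_fXX iterZf; move: uO; case: (val u) => x p /= xO.
  by rewrite fPd iternotO.
have F2 : #|[predC A1]| <= fcard (face eX nX) [predC A1] * (r * d).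
  apply: fcard_le_order => // u; rewrite !inE negbK => uO.
  apply: order_le_iter; first by rewrite muln_gt0 rpos.
  apply: val_inj; rewrite iter_fXX iterZf; move: uO; case: (val u) => x p /= xO.
  have i1 : iter (r * d) (face e n) x = x by rewrite mulnC; apply: iter_mul_id; apply: iterO.
  have i2 : iter (r * d) (face eP nP) p = p by apply: iter_mul_id; apply: fPd.
  by rewrite i1 i2.
have cA1 : #|A1| = (#|D| - r) * a.
  have hs := card_sig_pred (CC eZ nZ z0) (fun z => z.1 \notin O).
  have hf := @card_fib_pred Z D eZ nZ e n fst eZi nZi (fun z => erefl) (fun z => erefl) C clCe clCn connD [predC O] x0.
  have -> : #|A1| = #|[pred x | CC eZ nZ z0 x && (x.1 \notin O)]| by rewrite -hs; apply: eq_card.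
  rewrite (eq_card (_ : _ =i [pred z in C | fst z \in [predC O]])) ?hf -/a.
    by congr (_ * _); have := cardC O; rewrite cardO => <-; rewrite addKn.
  by move=> z; rewrite !inE.
have cA2 : #|[predC A1]| = r * a.
  have hs := card_sig_pred (CC eZ nZ z0) (fun z => z.1 \in O).
  have hf := @card_fib_pred Z D eZ nZ e n fst eZi nZi (fun z => erefl) (fun z => erefl) C clCe clCn connD O x0.
  have -> : #|[predC A1]| = #|[pred x | CC eZ nZ z0 x && (x.1 \in O)]|.
    by rewrite -hs; apply: eq_card => u; rewrite !inE negbK.
  rewrite (eq_card (_ : _ =i [pred z in C | fst z \in O])) ?hf -/a ?cardO //.
rewrite Fsplit in eu; rewrite cA1 in F1; rewrite cA2 in F2; rewrite cX hC1 in VX EX eu.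
move: (fcard nX X) (fcard eX X) (fcard (face eX nX) A1) (fcard (face eX nX) [predC A1]) VX EX F1 F2 eu.
move: #|D| Geq rN => N Geq rN V E G1 G2 VX EX F1 F2 eu.
have F2' : a <= G2 * d.
  by rewrite -(leq_pmul2l rpos) mulnA (mulnC r G2) -mulnA.
have [Nr EN] : exists Nr, N = Nr + r by exists (N - r); rewrite subnK.
subst N.
rewrite addnK in F1.
have t1 := leq_mul (leqnn (2 * d)) VX.
have t2 := leq_mul (leqnn (2 * k)) F1.
have t3 := leq_mul (leqnn (2 * k)) F2'.
have t4 := leq_mul (leqnn (2 * k * d)) eu.
have t5 := congr1 (muln (k * d)) EX.
have s3 : a * ((Nr + r) * (2 * k + 2 * d)) = a * (k * d * (Nr + r) + 2 * k * d + 2 * k * r) by rewrite Geq.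
have t6 := leq_mul (leqnn (2 * k * d)) a2.
have t7 := leq_mul (leqnn (2 * k)) a2.
have t8 : 0 < 2 * k by rewrite muln_gt0 kpos.
clear -t1 t2 t3 t4 t5 s3 t6 t7 t8.
lia.
Qed.
End Cover.

Section K2.
Variables (D : finType) (e n : D -> D) (d r : nat) (x0 : D).
Hypotheses (eK : cancel e e) (ni : injective n)
  (connD : forall x y, connect (mrel e n) x y)
  (n2 : forall x, n (n x) = x)
  (hr : order (face e n) x0 = r)
  (hd : forall x, ~~ fconnect (face e n) x0 x -> order (face e n) x = d)
  (cO : #|[predC fconnect (face e n) x0]| = d)
  (dpos : 0 < d) (rd : r != d).

Let fi : injective (face e n). Proof. by move=> x y /ni /(can_inj eK). Qed.
Let symf := fconnect_sym fi.

Lemma k2_step y0 x : fconnect (face e n) y0 x -> fconnect (face e n) y0 (e (n x)).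
Proof.
move=> h; rewrite (same_fconnect1_r fi).
have -> : face e n (e (n x)) = x by rewrite /face eK n2.
exact: h.
Qed.

Lemma k2_all y0 x1 : fconnect (face e n) y0 x1 -> fconnect (face e n) y0 (e x1) ->
  forall z, fconnect (face e n) y0 z.
Proof.
move=> h1 h2.
have good : forall j, fconnect (face e n) y0 (e (iter j (face e n) x1)).
  by elim=> //= j IH; apply: k2_step IH.
have eS : forall x, fconnect (face e n) y0 x -> fconnect (face e n) y0 (e x).
  move=> x hx; have h : fconnect (face e n) x1 x.
    by apply: connect_trans _ hx; rewrite symf.
  by rewrite -(iter_findex h) good.
have nS : forall x, fconnect (face e n) y0 x -> fconnect (face e n) y0 (n x).
  move=> x hx; have -> : n x = face e n (e x) by rewrite /face eK.
  by rewrite -(same_fconnect1_r fi) eS.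
move=> z; apply: (connect_ind_pred (connD y0 z)); first exact: connect0.
by move=> u v /orP[] /eqP -> hu; [apply: eS | apply: nS].
Qed.

Lemma k2_false : False.
Proof.
pose O := fconnect (face e n) x0.
have [y0 y0O] : exists y0, y0 \notin O.
  have : 0 < #|[predC O]| by rewrite cO.
  by case/card_gt0P => y; rewrite inE => h; exists y.
have eO : forall x, x \in O -> e x \notin O.
  move=> x xO; apply/negP => exO; have h2 := k2_all xO exO y0.
  by move/negP: y0O; apply.
pose S := fconnect (face e n) y0.
have x0S : x0 \notin S.
  apply: contra y0O => h; rewrite /O inE symf; exact: h.
have eS : forall x, x \in S -> e x \notin S.
  move=> x xS; apply/negP => exS; have h2 := k2_all xS exS x0.
  by move/negP: x0S; apply.
have SO : S \subset [predC O].
  apply/subsetP => z zS; rewrite inE; apply: contra y0O => zO.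
  by rewrite /O inE; apply: connect_trans zO _; rewrite symf.
have cS : #|S| = d by apply: hd; exact: y0O.
have eqSO : S =i [predC O] by apply/subset_cardP => //; rewrite cS cO.
have ei := can_inj eK.
have le1 : r <= d.
  rewrite -hr -cO /order -/O -(card_imset (mem O) ei); apply: subset_leq_card.
  by apply/subsetP => _ /imsetP[x xO ->]; rewrite inE eO.
have le2 : d <= r.
  rewrite -cS -hr /order -/O -(card_imset (mem S) ei); apply: subset_leq_card.
  apply/subsetP => _ /imsetP[x xS ->]; have := eS _ xS.
  by rewrite eqSO inE negbK.
by move/eqP: rd; apply; apply/eqP; rewrite eqn_leq le1 le2.
Qed.
End K2.

Lemma platonic_bound k d : 3 <= k -> 3 <= d -> k * d < 2 * k + 2 * d ->
  (k = 3 /\ (d = 3 \/ d = 4 \/ d = 5)) \/ (d = 3 /\ (k = 4 \/ k = 5)).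
Proof.
move=> k3 d3 h.
have k6 : k < 6.
  have h2 : 3 * (k - 2) <= d * (k - 2) by apply: leq_mul.
  rewrite mulnBr mulnBr (mulnC d k) in h2; lia.
have d6 : d < 6.
  have h2 : 3 * (d - 2) <= k * (d - 2) by apply: leq_mul.
  rewrite mulnBr mulnBr in h2; lia.
move: k3 d3 h k6 d6.
by case: k => [|[|[|[|[|[|k]]]]]] //; case: d => [|[|[|[|[|[|d]]]]]] //; auto.
Qed.


Lemma solid_false M eL nL k d (good : goodb M eL nL k d)
  (Marith : M.+1 * (2 * k + 2 * d) = 4 * k * d + M.+1 * k * d)
  (D : finType) (e n : D -> D) r x0 :
  cancel e e -> (forall x, e x != x) -> injective n ->
  (forall x y, connect (mrel e n) x y) -> (forall x, order n x = k) ->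
  order (face e n) x0 = r ->
  (forall x, ~~ fconnect (face e n) x0 x -> order (face e n) x = d) ->
  fcard n D + fcard (face e n) D = fcard e D + 2 -> 0 < k -> 0 < d -> r != d -> False.
Proof.
move=> eK efp ni conn hk hr hd pl kpos dpos rd.
have tEi := can_inj (tabEK good).
have tNi : injective (tN (M := M) nL).
  apply: (can_inj (g := iter k.-1 (tN nL))) => p.
  by rewrite -iterSr prednK // (tabN_iter good).
apply: (cover_false eK efp ni conn hk hr hd pl (tabEK good) (tabN_iter good) (tabF_iter good)) => //.
  move=> p q; apply: connect_trans (tab_conn0 good q).
  exact: mrel_sym tEi tNi (tab_conn0 good p).
by rewrite card_ord.
Qed.

Theorem mainTheorem8 (D : finType) (e n : D -> D) :
  ~ one_nearly_platonic e n.
Proof.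
case => [[[eK efp ni] conn pl] _ reg F2 [d [r [x0 [d3 r3 dr hx0 hd]]]]].
pose k := order n x0.
have hk : forall x, order n x = k by move=> x; apply: reg.
have kpos : 0 < k by apply: order_gt0.
clearbody k.
have hr : order (face e n) x0 = r := hx0.
have [hV hE [F' [hF hF']]] := G_counts eK efp ni hk hr hd.
have rd : r != d by rewrite eq_sym.
have pl' : fcard n D + fcard (face e n) D = fcard e D + 2 := pl.
have F1 : 1 <= F' by move: F2; rewrite /num_faces hF.
have dpos : 0 < d by apply: leq_trans d3.
have rN : r <= #|D| by rewrite -hr /order max_card.
have Geq : #|D| * (2 * k + 2 * d) = k * d * #|D| + 2 * k * d + 2 * k * r.
  have pl2 := pl'; rewrite hF in pl2.
  move: (fcard n D) (fcard e D) hV hE pl2 => V E hV hE pl2.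
  have h1 : #|D| = F' * d + r by lia.
  have e1 : 2 * d * #|D| = 2 * k * d * V by rewrite -hV; ring.
  have e2 : 2 * k * #|D| = 2 * k * d * F' + 2 * k * r by rewrite h1; ring.
  have e3 : k * d * #|D| = 2 * k * d * E by rewrite -hE; ring.
  have e4 : 2 * k * d * (V + F' + 1) = 2 * k * d * (E + 2) by rewrite -pl2 -addnA addn1.
  nia.
have Npos : 0 < #|D| by apply: leq_trans rN; apply: leq_trans r3.
have [k1|[k2|k3]] : k = 1 \/ k = 2 \/ 3 <= k by lia.
- subst k; have := leq_mul F1 (leqnn d); rewrite hF in pl'.
  move: (fcard n D) (fcard e D) hV hE pl' => V E hV hE pl2; lia.
- subst k.
  have n2 : forall x, n (n x) = x by move=> x; have := iter_order ni x; rewrite hk.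
  apply: (k2_false eK ni conn n2 hr hd _ dpos rd).
  have F'1 : F' = 1.
    rewrite hF in pl'; move: (fcard n D) (fcard e D) hV hE pl' => V E hV hE pl2; lia.
  rewrite F'1 mul1n in hF'; rewrite hF'.
  have := cardC (fconnect (face e n) x0); rewrite -/(order _ _) hr => <-.
  by rewrite addKn.
have kd : k * d < 2 * k + 2 * d.
  rewrite ltnNge; apply/negP => h.
  have := leq_mul (leqnn #|D|) h; rewrite Geq.
  clear -kpos dpos; lia.
have [[k3' [d3'|[d4|d5]]]|[d3' [k4|k5]]] := @platonic_bound k d k3 d3 kd.
- subst k d; exact: (solid_false tet_good _ eK efp ni conn hk hr hd pl').
- subst k d; exact: (solid_false cube_good _ eK efp ni conn hk hr hd pl').
- subst k d; exact: (solid_false dod_good _ eK efp ni conn hk hr hd pl').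
- subst k d; exact: (solid_false octa_good _ eK efp ni conn hk hr hd pl').
- subst k d; exact: (solid_false ico_good _ eK efp ni conn hk hr hd pl').
Qed.
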